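(* Let $M$ be a magma satisfying $xy = xz$ and $(xy)z = x$ for all $x,y,z\in M$. Then $M$ satisfies $xy = x$ for all $x,y\in M$ if and only if $M$ avoids the magma $N$ on $\{0,1\}$ with Cayley table \[ \begin{array}{c|cc} N & 0 & 1 \\ \hline 0 & 1 & 1 \\ 1 & 0 & 0 \end{array}. \]
   Context: A magma is a nonempty set with a binary operation, written by juxtaposition. A magma $M$ avoids a magma $F$ if no submagma of $M$ is isomorphic to $F$. *)

(* Defs.v *)
From Stdlib Require Import Bool.

Definition submagma {M : Type} (op : M -> M -> M) (S : M -> Prop) : Prop :=
  (exists x, S x) /\ (forall x y, S x -> S y -> S (op x y)).

Definition sub_isomorphic {M F : Type} (op : M -> M -> M) (S : M -> Prop)
    (opF : F -> F -> F) : Prop :=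
  exists (f : F -> M) (g : M -> F),
    (forall a, S (f a)) /\
    (forall a, g (f a) = a) /\
    (forall x, S x -> f (g x) = x) /\
    (forall a b, f (opF a b) = op (f a) (f b)).

Definition avoids {M F : Type} (op : M -> M -> M) (opF : F -> F -> F) : Prop :=
  ~ (exists S : M -> Prop, submagma op S /\ sub_isomorphic op S opF).

(* The magma N on {0,1} (0 = false, 1 = true): 0*0 = 0*1 = 1, 1*0 = 1*1 = 0. *)
Definition N_op (x y : bool) : bool :=
  match x, y with
  | false, false => true
  | false, true => true
  | true, false => false
  | true, true => false
  end.

(* Main.v *)
Require Import Defs.
From Stdlib Require Import Classical ClassicalDescription.

Theorem mainTheorem5 (M : Type) (m0 : M) (op : M -> M -> M)
  (h1 : forall x y z : M, op x y = op x z)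
  (h2 : forall x y z : M, op (op x y) z = x) :
  (forall x y : M, op x y = x) <-> avoids op N_op.
Proof.
  split.
  - intros H [S [_ [f [g [_ [Hgf [_ Hf]]]]]]].
    assert (E : f true = f false).
    { change true with (N_op false false). rewrite Hf. apply H. }
    pose proof (Hgf true) as A. rewrite E, Hgf in A. discriminate.
  - intros Hav a b. apply NNPP. intro Hne.
    set (c := op a b) in *.
    assert (Hca : forall z, op c z = a) by (intro; apply h2).
    assert (Hac : forall z, op a z = c) by (intro; apply h1).
    apply Hav.
    exists (fun x => x = a \/ x = c). split.
    + split. exists a; auto.
      intros x y [->| ->] _; rewrite ?Hca, ?Hac; auto.
    + exists (fun t : bool => if t then c else a).
      exists (fun x => if excluded_middle_informative (x = c) then true else false).
      repeat split.
      * intros [|]; auto.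
      * intros [|].
        -- destruct (excluded_middle_informative (c = c)); congruence.
        -- destruct (excluded_middle_informative (a = c)); congruence.
      * intros x [->| ->];
        destruct (excluded_middle_informative _); congruence.
      * intros [|] [|]; simpl; rewrite ?Hca, ?Hac; reflexivity.
Qed.
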